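(* Let $n\ge 3$. The set $\mathbf{W}^{\le 5}_{\mathrm{bf}}(n)$ is the unique maximal transition semigroup of a minimal DFA $\mathcal{D}_n$ of a bifix-free language (with the state conventions below) in which all pairs of states from $Q_M$ are colliding.
   Context: A language is bifix-free if no word of it is a proper prefix or a proper suffix of another word of it. For a minimal complete DFA $\mathcal{D}_n$ of a bifix-free language with $n$ states the states are named $Q=\{0,\dots,n-1\}$ so that $0$ is initial, $n-1$ is the empty state and $n-2$ is the unique final state (quotient $\{\varepsilon\}$). Transformations act on the right, $q(st)=(qs)t$; the transition semigroup $T(n)$ is the semigroup of transformations of $Q$ induced by nonempty words. Let $Q_M=\{1,\dots,n-3\}$. An unordered pair $\{p,q\}$ of distinct states of $Q_M$ is colliding (in $T(n)$) if there is $t\in T(n)$ with $0t=p$ and $rt=q$ for some $r\in Q_M$. Let $\mathbf{B}_{\mathrm{bf}}(n)$ be the set of all transformations $t$ of $Q$ with $0\notin Qt$, $(n-1)t=n-1$, $(n-2)t=n-1$, and for all $j\ge1$, either $0t^j=n-1$ or $0t^j\ne qt^j$ for all $0<q<n-1$. Then $\mathbf{W}^{\le 5}_{\mathrm{bf}}(n)=\{t\in\mathbf{B}_{\mathrm{bf}}(n)\mid$ for all distinct $p,q\in Q_M$, $pt=qt=n-1$ or $pt\ne qt\}$. *)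

(* Defs.v *)
From mathcomp Require Import all_boot.
Set Implicit Arguments.
Unset Strict Implicit.
Unset Printing Implicit Defensive.

(* States Q = {0,...,n-1} are 'I_n; special states are referred to by their
   nat value: 0 initial, n-1 empty state, n-2 unique final state. *)

Definition trans (n : nat) := {ffun 'I_n -> 'I_n}.

(* Action of a word (transformations act on the right: q(st) = (qs)t). *)
Definition run (n : nat) (Sigma : Type) (delta : Sigma -> trans n)
  (w : seq Sigma) (q : 'I_n) : 'I_n :=
  foldl (fun p a => delta a p) q w.

Definition lang (n : nat) (Sigma : Type) (delta : Sigma -> trans n)
  (w : seq Sigma) : Prop :=
  exists q0 : 'I_n, val q0 = 0 /\ val (run delta w q0) = n - 2.

Definition bifix_free (A : Type) (L : seq A -> Prop) : Prop :=
  forall u v : seq A, L u -> L v -> forall x : seq A, x <> [::] ->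
    v <> u ++ x /\ v <> x ++ u.

(* D_n is a minimal complete DFA of a bifix-free language, with initial state
   0, empty state n-1 and unique final state n-2 whose quotient is {eps}. *)
Definition bf_min_dfa (n : nat) (Sigma : Type) (delta : Sigma -> trans n)
  : Prop :=
  (forall p q0 : 'I_n, val q0 = 0 -> exists w, run delta w q0 = p) /\
  (forall p q : 'I_n, p <> q -> exists w : seq Sigma,
      (val (run delta w p) == n - 2) != (val (run delta w q) == n - 2)) /\
  (forall q : 'I_n, val q = n - 1 -> forall w, val (run delta w q) <> n - 2) /\
  (forall q : 'I_n, val q = n - 2 -> forall w, w <> [::] ->
      val (run delta w q) <> n - 2) /\
  bifix_free (lang delta).

Definition in_T (n : nat) (Sigma : Type) (delta : Sigma -> trans n)
  (t : trans n) : Prop :=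
  exists w : seq Sigma, w <> [::] /\ forall q, t q = run delta w q.

Definition inQM (n : nat) (q : 'I_n) : Prop := 0 < val q < n - 2.

Definition collide (n : nat) (T : trans n -> Prop) (p q : 'I_n) : Prop :=
  exists t : trans n, T t /\
    exists r q0 : 'I_n, inQM r /\ val q0 = 0 /\ t q0 = p /\ t r = q.

Definition all_colliding (n : nat) (T : trans n -> Prop) : Prop :=
  forall p q : 'I_n, inQM p -> inQM q -> p <> q ->
    collide T p q \/ collide T q p.

Definition inB (n : nat) (t : trans n) : Prop :=
  (forall q, val (t q) <> 0) /\
  (forall q : 'I_n, val q = n - 1 -> val (t q) = n - 1) /\
  (forall q : 'I_n, val q = n - 2 -> val (t q) = n - 1) /\
  (forall j, 1 <= j -> forall q0 : 'I_n, val q0 = 0 ->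
     val (iter j (fun x => t x) q0) = n - 1 \/
     (forall q : 'I_n, 0 < val q < n - 1 ->
        iter j (fun x => t x) q0 <> iter j (fun x => t x) q)).

Definition inW (n : nat) (t : trans n) : Prop :=
  inB t /\
  forall p q : 'I_n, inQM p -> inQM q -> p <> q ->
    (val (t p) = n - 1 /\ val (t q) = n - 1) \/ t p <> t q.

(* Main.v *)
Require Import Defs.
From mathcomp Require Import all_boot zify.
From Stdlib Require Import Classical ClassicalEpsilon.
Set Implicit Arguments.
Unset Strict Implicit.
Unset Printing Implicit Defensive.

Definition GoodF n (f : 'I_n -> 'I_n) : Prop :=
 [/\ (forall q, val (f q) <> 0),
   (forall q : 'I_n, val q = n-1 -> val (f q) = n-1),
   (forall q : 'I_n, val q = n-2 -> val (f q) = n-1),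
   (forall p q : 'I_n, inQM p -> inQM q -> p <> q ->
       (val (f p) = n-1 /\ val (f q) = n-1) \/ f p <> f q) &
   (forall q0 q : 'I_n, val q0 = 0 -> 0 < val q < n-1 ->
       val (f q0) = n-1 \/ f q0 <> f q)].

Lemma qm_of n (g : 'I_n -> 'I_n) a :
  (forall q : 'I_n, val q = n-1 -> val (g q) = n-1) ->
  (forall q : 'I_n, val q = n-2 -> val (g q) = n-1) ->
  val a <> 0 -> val (g a) <> n-1 -> inQM a.
Proof.
move=> g2 g3 h0 h1.
have h2 : val a <> n-1 by move=> /g2.
have h3 : val a <> n-2 by move=> /g3.
have ha : val a < n := ltn_ord a.
rewrite /inQM; apply/andP; split; lia.
Qed.

Lemma good_comp n (f g : 'I_n -> 'I_n) :
  GoodF f -> GoodF g -> GoodF (fun x => g (f x)).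
Proof.
case=> f1 f2 f3 f4 f5 [g1 g2 g3 g4 g5]; split.
- by move=> q; apply: g1.
- by move=> q hq; apply: g2; apply: f2.
- by move=> q hq; apply: g2; apply: f3.
- move=> p q hp hq hpq.
  have [ea|na] := eqVneq (val (g (f p))) (n-1).
    have [eb|nb] := eqVneq (val (g (f q))) (n-1); first by left.
    right=> E; move: nb; by rewrite -E ea eqxx.
  right => E.
  have na' : val (g (f p)) <> n-1 by move/eqP: na.
  have nb' : val (g (f q)) <> n-1 by rewrite -E.
  have Ha := qm_of g2 g3 (f1 p) na'.
  have Hb := qm_of g2 g3 (f1 q) nb'.
  case: (f4 p q hp hq hpq) => [[h _]|hne].
    by apply: na'; apply: g2.
  by case: (g4 _ _ Ha Hb hne) => [[h _]|//]; apply: na'.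
- move=> q0 q h0 hq.
  have [ea|na] := eqVneq (val (g (f q0))) (n-1); first by left.
  right => E.
  have na' : val (g (f q0)) <> n-1 by move/eqP: na.
  have nb' : val (g (f q)) <> n-1 by rewrite -E.
  have Ha := qm_of g2 g3 (f1 q0) na'.
  have Hb := qm_of g2 g3 (f1 q) nb'.
  case: (f5 q0 q h0 hq) => [h|hne].
    by apply: na'; apply: g2.
  by case: (g4 _ _ Ha Hb hne) => [[h _]|//]; apply: na'.
Qed.

Lemma good_iter n (f : 'I_n -> 'I_n) : GoodF f -> forall j, 0 < j -> GoodF (iter j f).
Proof.
move=> Gf; elim=> // [[|j] IH] _; first exact: Gf.
change (GoodF (fun x => f (iter j.+1 f x))).
exact: good_comp (IH isT) Gf.
Qed.

Lemma good_ext n (f g : 'I_n -> 'I_n) : GoodF f -> f =1 g -> GoodF g.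
Proof.
move=> [f1 f2 f3 f4 f5] E; split.
- by move=> q; rewrite -E.
- by move=> q; rewrite -E; apply: f2.
- by move=> q; rewrite -E; apply: f3.
- by move=> p q; rewrite -!E; apply: f4.
- by move=> p q; rewrite -!E; apply: f5.
Qed.

Lemma W_good n (t : trans n) : inW t -> GoodF (fun x => t x).
Proof.
case=> [[h1 [h2 [h3 h4]]] h5]; split; [exact h1|exact h2|exact h3|exact h5|].
move=> q0 q h0 hq; case: (h4 1 isT q0 h0) => [h|h]; [by left | right; exact: h].
Qed.

Lemma good_W n (t : trans n) : GoodF (fun x => t x) -> inW t.
Proof.
move=> G; have [h1 h2 h3 h4 h5] := G; split; last exact h4.
split; first exact h1; split; first exact h2; split; first exact h3.
move=> j hj q0 h0; have [_ _ _ _ g5] := good_iter G hj.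
have [e|ne] := eqVneq (val (iter j (fun x => t x) q0)) (n-1); first by left.
right=> q hq; case: (g5 q0 q h0 hq) => // h; by rewrite h eqxx in ne.
Qed.

Lemma run_cat n (Sigma : Type) (delta : Sigma -> trans n) u v q :
  run delta (u ++ v) q = run delta v (run delta u q).
Proof. by rewrite /run foldl_cat. Qed.

Lemma good_run n (Sigma : Type) (delta : Sigma -> trans n) :
  (forall a, GoodF (fun x => delta a x)) ->
  forall w, w <> [::] -> GoodF (fun q => run delta w q).
Proof.
move=> Hd [//|a w] _; elim: w a => [|b w IH] a; first exact: Hd.
exact: good_comp (Hd a) (IH b).
Qed.

Lemma cat_ne (A : Type) (u w : seq A) : w <> [::] -> u ++ w <> [::].
Proof. by case: u => [|a u] //=. Qed.

Lemma empty_state n (Sigma : Type) (delta : Sigma -> trans n) :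
  bf_min_dfa delta -> forall e : 'I_n, val e = n-1 -> forall q : 'I_n,
  (forall w, val (run delta w q) <> n-2) -> val q = n-1.
Proof.
case=> _ [hd [h3 _]] e he q hq.
case: (eqVneq q e) => [->|qe]; first exact he.
have [w hw] := hd q e (fun E => negP qe (introT eqP E)).
have a1 : (val (run delta w q) == n-2) = false by apply/eqP; apply: hq.
have a2 : (val (run delta w e) == n-2) = false by apply/eqP; apply: h3.
by rewrite a1 a2 in hw.
Qed.

Lemma p2_nonzero n (Sigma : Type) (delta : Sigma -> trans n) (hn : 3 <= n) :
  bf_min_dfa delta -> forall w, w <> [::] -> forall q, val (run delta w q) <> 0.
Proof.
move=> hbf w hw q h; have hbf' := hbf; case: hbf' => [hr [_ [_ [_ hbfree]]]].
have hf : n - 2 < n by lia.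
set f := Ordinal hf.
set z := run delta w q.
have [u hu] := hr q z h.
have [v hv] := hr f z h.
have Lv : lang delta v by exists z; split => //; rewrite hv.
have Luv : lang delta ((u ++ w) ++ v).
  exists z; split => //; rewrite !run_cat hu -/z hv //.
have hne : u ++ w <> [::] by apply: cat_ne.
by case: (hbfree _ _ Lv Luv _ hne) => _ H; apply: H.
Qed.

Lemma p2_top n (Sigma : Type) (delta : Sigma -> trans n) (hn : 3 <= n) :
  bf_min_dfa delta -> forall w q, val q = n-1 -> val (run delta w q) = n-1.
Proof.
move=> hbf w q hq; have hbf' := hbf; case: hbf' => _ [_ [h3 _]].
have he : n - 1 < n by lia.
apply: (@empty_state _ _ _ hbf (Ordinal he) erefl).
move=> w'.
rewrite -run_cat; exact: h3.
Qed.

Lemma p2_fin n (Sigma : Type) (delta : Sigma -> trans n) (hn : 3 <= n) :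
  bf_min_dfa delta -> forall w q, w <> [::] -> val q = n-2 -> val (run delta w q) = n-1.
Proof.
move=> hbf w q hw hq; have hbf' := hbf; case: hbf' => _ [_ [_ [h4 _]]].
have he : n - 1 < n by lia.
apply: (@empty_state _ _ _ hbf (Ordinal he) erefl).
move=> w'.
rewrite -run_cat; apply: h4 => //.
by case: w hw.
Qed.

Lemma p2_K n (Sigma : Type) (delta : Sigma -> trans n) (hn : 3 <= n) :
  bf_min_dfa delta -> forall w, w <> [::] -> forall q0 q : 'I_n,
  val q0 = 0 -> 0 < val q < n-1 -> run delta w q0 = run delta w q ->
  val (run delta w q0) = n-1.
Proof.
move=> hbf w hw q0 q h0 hq E; apply: NNPP => hne.
have hbf' := hbf; case: hbf' => [hr [_ [_ [_ hbfree]]]].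
have he : n - 1 < n by lia.
have [v hv] : exists v, val (run delta v (run delta w q0)) = n-2.
  apply: NNPP => hn'; apply: hne; apply: (@empty_state _ _ _ hbf (Ordinal he) erefl).
  by move=> v hv; apply: hn'; exists v.
have hq2 : val q <> n-2.
  move=> hq2; apply: hne; rewrite E; exact: (p2_fin hn hbf hw hq2).
have [u hu] := hr q q0 h0.
have hu0 : u <> [::] by move=> hu0; move: hu; rewrite hu0 /= => hu; move: hq; rewrite -hu h0.
have L1 : lang delta (w ++ v) by exists q0; split => //; rewrite run_cat.
have L2 : lang delta (u ++ (w ++ v)).
  by exists q0; split => //; rewrite !run_cat hu -E.
by case: (hbfree _ _ L1 L2 _ hu0) => _ H; apply: H.
Qed.

Fixpoint repw (A : Type) (j : nat) (w : seq A) : seq A :=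
  if j is j'.+1 then repw j' w ++ w else [::].

Lemma repw_ne (A : Type) j (w : seq A) : 0 < j -> w <> [::] -> repw j w <> [::].
Proof. by case: j => // j _ hw /=; apply: cat_ne. Qed.

Lemma part2 n (hn : 3 <= n) (Sigma : finType) (delta : Sigma -> trans n) :
  bf_min_dfa delta -> all_colliding (in_T delta) ->
  forall t : trans n, in_T delta t -> inW t.
Proof.
move=> hbf hcol t [w [hw ht]].
have Eit : forall j q, iter j (fun x => t x) q = run delta (repw j w) q.
  elim=> [//|j IH] q /=; by rewrite IH ht run_cat.
split; [split; [|split; [|split]]|].
- by move=> q; rewrite ht; apply: p2_nonzero.
- by move=> q hq; rewrite ht; apply: p2_top.
- by move=> q hq; rewrite ht; apply: p2_fin.
- move=> j hj q0 h0.
  have [e|ne] := eqVneq (val (iter j (fun x => t x) q0)) (n-1); first by left.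
  right=> q hq E; move: ne; rewrite !Eit in E *.
  by rewrite (p2_K hn hbf (repw_ne hj hw) h0 hq E) eqxx.
- move=> p q hp hq hpq.
  have [ep|np] := eqVneq (val (t p)) (n-1).
    case: (classic (t p = t q)) => [E|E]; last by right.
    by left; split => //; rewrite -E.
  right=> E.
  have qmlt : forall r : 'I_n, inQM r -> 0 < val r < n-1.
    by move=> r /andP [? ?]; apply/andP; split; lia.
  case: (hcol p q hp hq hpq) => [[t' [[w' [hw' ht']] [r [q0 [hr [h0 [e1 e2]]]]]]] | [t' [[w' [hw' ht']] [r [q0 [hr [h0 [e1 e2]]]]]]]].
  + have hne : w' ++ w <> [::] by apply: cat_ne.
    have E' : run delta (w' ++ w) q0 = run delta (w' ++ w) r.
      by rewrite !run_cat -!ht' e1 e2 -!ht.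
    have := p2_K hn hbf hne h0 (qmlt _ hr) E'.
    by rewrite run_cat -ht' e1 -ht => h; rewrite h eqxx in np.
  + have hne : w' ++ w <> [::] by apply: cat_ne.
    have E' : run delta (w' ++ w) q0 = run delta (w' ++ w) r.
      by rewrite !run_cat -!ht' e1 e2 -!ht.
    have := p2_K hn hbf hne h0 (qmlt _ hr) E'.
    by rewrite run_cat -ht' e1 -ht -E => h; rewrite h eqxx in np.
Qed.

Definition gmap n (a1 b1 a2 b2 e : 'I_n) (x : 'I_n) : 'I_n :=
  if x == a1 then b1 else if x == a2 then b2 else e.

Lemma ord_neq n (x y : 'I_n) : val x <> val y -> x <> y.
Proof. by move=> h E; apply: h; rewrite E. Qed.

Lemma good_gmap n (hn : 3 <= n) (z e a1 b1 a2 b2 : 'I_n) :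
  val z = 0 -> val e = n-1 ->
  0 < val b1 -> 0 < val b2 -> val a1 < n-2 -> val a2 < n-2 ->
  (0 < val a1 -> 0 < val a2 -> val a1 <> val a2 ->
     val b1 <> val b2 \/ (val b1 = n-1 /\ val b2 = n-1)) ->
  (val a1 = 0 -> val b1 = n-1 \/ (val b1 <> n-1 /\ (0 < val a2 -> val b1 <> val b2))) ->
  (val a2 = 0 -> val a1 <> 0 -> val b2 = n-1 \/ (val b2 <> n-1 /\ val b1 <> val b2)) ->
  GoodF (gmap a1 b1 a2 b2 e).
Proof.
move=> hz he hb1 hb2 ha1 ha2 hinj hP1 hP2; rewrite /gmap; split.
- by move=> q; case: eqP => _; [lia|case: eqP => _; lia].
- move=> q hq; case: eqP => [E|_]; first by subst; lia.
  case: eqP => [E|_]; first by subst; lia. exact he.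
- move=> q hq; case: eqP => [E|_]; first by subst; lia.
  case: eqP => [E|_]; first by subst; lia. exact he.
- move=> p q /andP [hp1 hp2] /andP [hq1 hq2] hpq.
  have C : forall X Y : 'I_n, (val X = n-1 /\ val Y = n-1) \/ val X <> val Y ->
     (val X = n-1 /\ val Y = n-1) \/ X <> Y.
    by move=> X Y [h|h]; [left|right; apply: ord_neq].
  case: eqP => [E1|N1]; case: eqP => [E2|N2]; subst => //;
    try (case: eqP => [E3|N3]); try (case: eqP => [E4|N4]); subst => //;
    apply: C; try lia.
  + by case: (hinj hp1 hq1 (fun E => hpq (val_inj E))) => h; lia.
  + by case: (hinj hq1 hp1 (fun E => hpq (esym (val_inj E)))) => h; lia.
- move=> q0 q h0 /andP [hq1 hq2].
  have C : forall X Y : 'I_n, val X = n-1 \/ val X <> val Y -> val X = n-1 \/ X <> Y.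
    by move=> X Y [h|h]; [left|right; apply: ord_neq].
  apply: C.
  case: eqP => [E1|N1]; case: eqP => [E2|N2]; subst; try lia;
    try (case: eqP => [E3|N3]); try (case: eqP => [E4|N4]); subst; try lia.
Qed.

Definition dW n (tc t : trans n) : trans n :=
  if excluded_middle_informative (GoodF (fun x => t x)) then t else tc.

Lemma part1 n (hn : 3 <= n) :
  exists (Sigma : finType) (delta : Sigma -> trans n),
      bf_min_dfa delta /\
      (forall t : trans n, in_T delta t <-> inW t) /\
      all_colliding (in_T delta).
Proof.
have h0 : 0 < n by lia.
have h1 : n - 1 < n by lia.
have h2 : n - 2 < n by lia.
set z : 'I_n := Ordinal h0.
set e : 'I_n := Ordinal h1.
set f : 'I_n := Ordinal h2.
have hz : val z = 0 by [].
have he : val e = n-1 by [].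
have hf : val f = n-2 by [].
set tc : trans n := [ffun x => gmap z e z e e x].
have Gtc : GoodF (fun x => tc x).
  have G : GoodF (gmap z e z e e).
    by apply: (good_gmap hn hz he) => //; lia.
  apply: good_ext G _; by move=> x; rewrite ffunE.
set delta := dW tc.
have Gd : forall a, GoodF (fun x => delta a x).
  by move=> a; rewrite /delta /dW; case: excluded_middle_informative.
have dId : forall t : trans n, GoodF (fun x => t x) -> delta t = t.
  by move=> t Gt; rewrite /delta /dW; case: excluded_middle_informative.
have Gg : forall a1 b1 a2 b2, GoodF (gmap a1 b1 a2 b2 e) ->
   delta [ffun x => gmap a1 b1 a2 b2 e x] = [ffun x => gmap a1 b1 a2 b2 e x].
  move=> a1 b1 a2 b2 G; apply: dId; apply: good_ext G _.
  by move=> x; rewrite ffunE.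
have run1 : forall (t : trans n) q, run delta [:: t] q = delta t q by [].
have Rtop : forall w q, val q = n-1 -> val (run delta w q) = n-1.
  elim=> [//|a w IH] q hq /=; apply: IH; by case: (Gd a) => _ g2 _ _ _; apply: g2.
have Rfin : forall w q, w <> [::] -> val q = n-2 -> val (run delta w q) = n-1.
  case=> [//|a w] q _ hq /=; apply: Rtop; by case: (Gd a) => _ _ g3 _ _; apply: g3.
have Grun := good_run Gd.
exists (trans n), delta; split; [|split].
- split; [|split; [|split; [|split]]].
  + move=> p q0 hq0.
    have [p0|pn0] := eqVneq (val p) 0.
      by exists [::]; apply: val_inj; rewrite /= hq0 p0.
    have G : GoodF (gmap z p z p e).
      apply: (good_gmap hn hz he) => //; try lia.
    exists [:: [ffun x => gmap z p z p e x]].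
    rewrite run1 Gg // ffunE /gmap.
    by have -> : q0 == z by apply/eqP; apply: val_inj; rewrite hq0.
  + have key : forall p q : 'I_n, p <> q -> val p <> n-2 -> val p <> n-1 ->
       exists w : seq (trans n),
        (val (run delta w p) == n - 2) != (val (run delta w q) == n - 2).
      move=> p q pq p2 p1.
      have hp : val p < n := ltn_ord p.
      have G : GoodF (gmap p f p f e).
        by apply: (good_gmap hn hz he) => //; lia.
      exists [:: [ffun x => gmap p f p f e x]].
      rewrite !run1 Gg // !ffunE /gmap eqxx.
      have -> : (q == p) = false by apply/eqP => E; apply: pq.
      rewrite he hf eqxx.
      by have -> : (n-1 == n-2) = false by apply/eqP; lia.
    move=> p q pq.
    have [p2|p2] := eqVneq (val p) (n-2).
      exists [::]; rewrite /= p2 eqxx.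
      by have -> : (val q == n-2) = false by apply/eqP => E; apply: pq; apply: val_inj; rewrite p2 E.
    have [p1|p1] := eqVneq (val p) (n-1).
      have [q2|q2] := eqVneq (val q) (n-2).
        exists [::]; rewrite /= q2 eqxx.
        by have -> : (val p == n-2) = false by apply/eqP => E; apply: pq; apply: val_inj; rewrite q2 E.
      have q1 : val q <> n-1 by move=> E; apply: pq; apply: val_inj; rewrite p1 E.
      have [w hw] := key q p (fun E => pq (esym E)) (elimN eqP q2) q1.
      by exists w; rewrite eq_sym.
    exact: key pq (elimN eqP p2) (elimN eqP p1).
  + by move=> q hq w; rewrite Rtop //; lia.
  + by move=> q hq w hw; rewrite Rfin //; lia.
  + move=> u v [q0 [hq0 hu]] [q0' [hq0' hv]] x hx.
    have E0 : q0' = q0 by apply: val_inj; rewrite hq0 hq0'.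
    subst q0'; split => E; move: hv; rewrite E run_cat.
      by rewrite Rfin //; lia.
    set r := run delta x q0 => hv.
    have hu0 : u <> [::] by move=> U; move: hu; rewrite U /run /= => h; have h' : val q0 = n-2 := h; lia.
    have [_ g2 _ _ g5] := Grun u hu0.
    have [x1 _ _ _ _] := Grun x hx.
    have r0 : val r <> 0 := x1 q0.
    clearbody r.
    have r1 : val r <> n-1.
      move=> /g2 h; have a : nat_of_ord (run delta u r) = n-1 := h.
      have b : nat_of_ord (run delta u r) = n-2 := hv; lia.
    have hr : val r < n := ltn_ord r.
    case: (g5 q0 r hq0 _) => /= [|h|h].
    * have a : nat_of_ord r <> 0 := r0.
      have b : nat_of_ord r <> n-1 := r1.
      have c : nat_of_ord r < n := hr.
      apply/andP; split.
        have : 0 < nat_of_ord r by lia. exact.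
      have : nat_of_ord r < n-1 by lia. exact.
    * have a : nat_of_ord (run delta u q0) = n-1 := h.
      have b : nat_of_ord (run delta u q0) = n-2 := hu. lia.
    * by apply: h; apply: val_inj; rewrite hu hv.
- move=> t; split.
    move=> [w [hw ht]]; apply: good_W; apply: good_ext (Grun w hw) _.
    by move=> q; rewrite ht.
  move=> /W_good G; exists [:: t]; split => // q.
  by rewrite run1 dId.
- move=> p q /andP [hp1 hp2] /andP [hq1 hq2] pq; left.
  have G : GoodF (gmap z p q q e).
    apply: (good_gmap hn hz he) => //; try lia.
    move=> _; right; split; [lia|] => _ E; apply: pq; exact: val_inj.
  exists [ffun x => gmap z p q q e x]; split.
    exists [:: [ffun x => gmap z p q q e x]]; split => // x.
    by rewrite run1 Gg.
  exists q, z; split; [by apply/andP|split => //].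
  rewrite !ffunE /gmap eqxx; split => //.
  have -> : (q == z) = false by apply/eqP => E; move: hq1; rewrite E.
  by rewrite eqxx.
Qed.

Theorem mainTheorem9 (n : nat) (hn : 3 <= n) :
  (* W is the transition semigroup of such a DFA in which all pairs collide *)
  (exists (Sigma : finType) (delta : Sigma -> trans n),
      bf_min_dfa delta /\
      (forall t : trans n, in_T delta t <-> inW t) /\
      all_colliding (in_T delta)) /\
  (* and it contains every such transition semigroup (hence unique maximal) *)
  (forall (Sigma : finType) (delta : Sigma -> trans n),
      bf_min_dfa delta -> all_colliding (in_T delta) ->
      forall t : trans n, in_T delta t -> inW t).
Proof.
split; [exact: part1 hn | exact: part2 hn].
Qed.
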